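(* Let $w\in\mathfrak{S}_n$ with $\{k,k+1\}\subseteq\textsf{supp}(w)$. (a) Some reduced word for $w$ has the form (a word in letters $\le k$) followed by (a word in letters $\ge k+1$) if and only if there exists $x<k+1$ such that $\{w(1),\dots,w(k)\}=[1,k+1]\setminus\{x\}$ and $w^{-1}(x)>k+1$. (b) Some reduced word for $w$ has the form (a word in letters $\ge k+1$) followed by (a word in letters $\le k$) if and only if there exists $y>k+1$ such that $\{w(k+2),\dots,w(n)\}=[k+1,n]\setminus\{y\}$ and $w^{-1}(y)<k+1$. (c) The letters $k$ and $k+1$ are interlaced in $w$ if and only if there exist $i\in[1,k]$ and $j\in[k+2,n]$ such that $w(i)>k+1$ and $w(j)<k+1$.
   Context: Permutations are written in one-line notation and composed right to left; $\sigma_i=(i,i+1)$, and reduced words are sequences of subscripts of reduced expressions. $\textsf{supp}(w)$ is the set of letters appearing in reduced words of $w$. For $k,k+1\in\textsf{supp}(w)$: they have increasing orientation in $w$ if in every reduced word all occurrences of $k$ are to the left of all occurrences of $k+1$; decreasing orientation if all occurrences of $k$ are to the right of all occurrences of $k+1$; otherwise they are interlaced. *)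

(* Defs.v *)
From mathcomp Require Import all_boot all_fingroup.
Set Implicit Arguments. Unset Strict Implicit. Unset Printing Implicit Defensive.

(* Permutations of [1,n] are modelled as {perm 'I_n}: the ordinal i : 'I_n
   stands for the integer i+1.  Letters (subscripts) are 1-indexed nats:
   letter a (0 < a < n) is sigma_a = (a, a+1), i.e. the transposition of the
   ordinals a-1 and a. *)
Definition sigma (n a : nat) : {perm 'I_n} :=
  match (insub a.-1 : option 'I_n), (insub a : option 'I_n) with
  | Some i, Some j => tperm i j
  | _, _ => 1%g
  end.

Definition valid_word (n : nat) (s : seq nat) : bool := all (fun a => 0 < a < n) s.

(* The product sigma_{a_1} o sigma_{a_2} o ... o sigma_{a_m} (composition right
   to left, as functions).  In mathcomp (p * q) x = q (p x), hence the order. *)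
Definition word_perm (n : nat) (s : seq nat) : {perm 'I_n} :=
  foldr (fun a p => (p * sigma n a)%g) 1%g s.

Definition reduced_word (n : nat) (w : {perm 'I_n}) (s : seq nat) : Prop :=
  [/\ valid_word n s, word_perm n s = w &
      forall t, valid_word n t -> word_perm n t = w -> size s <= size t].

Definition in_supp (n : nat) (w : {perm 'I_n}) (a : nat) : Prop :=
  exists s, reduced_word w s /\ a \in s.

Definition incr_orient (n : nat) (w : {perm 'I_n}) (k : nat) : Prop :=
  forall s, reduced_word w s ->
    forall i j, i < size s -> j < size s ->
      nth 0 s i = k -> nth 0 s j = k.+1 -> i < j.

Definition decr_orient (n : nat) (w : {perm 'I_n}) (k : nat) : Prop :=
  forall s, reduced_word w s ->
    forall i j, i < size s -> j < size s ->
      nth 0 s i = k -> nth 0 s j = k.+1 -> j < i.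

Definition interlaced (n : nat) (w : {perm 'I_n}) (k : nat) : Prop :=
  ~ incr_orient w k /\ ~ decr_orient w k.

(* Main.v *)
Require Import Defs.
From mathcomp Require Import all_boot all_fingroup.
From mathcomp Require Import zify.
From Stdlib Require Import Classical.
Set Implicit Arguments. Unset Strict Implicit. Unset Printing Implicit Defensive.

Section S.
Variable n : nat.
Local Notation perm := {perm 'I_n}.

Lemma sigmaE a : 0 < a < n -> exists A0 A1 : 'I_n,
  nat_of_ord A0 = a.-1 /\ nat_of_ord A1 = a /\ sigma n a = tperm A0 A1.
Proof.
move=> /andP[a0 an].
have h0 : a.-1 < n by lia.
exists (Ordinal h0), (Ordinal an); split => //; split => //.
by rewrite /sigma (insubT (fun x => x < n) h0) (insubT (fun x => x < n) an).
Qed.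

Lemma sigma_val a (y : 'I_n) : 0 < a < n ->
  nat_of_ord (sigma n a y) = if nat_of_ord y == a.-1 then a else if nat_of_ord y == a then a.-1 else nat_of_ord y.
Proof.
move=> ha; have [A0 [A1 [e0 [e1 ->]]]] := sigmaE ha.
case: tpermP => [->|->|h1 h2]; rewrite ?e0 ?e1 ?eqxx //.
- by case: ifP => //; lia.
- have : nat_of_ord y != nat_of_ord A0 by apply/eqP => /val_inj.
  have : nat_of_ord y != nat_of_ord A1 by apply/eqP => /val_inj.
  rewrite e0 e1 => /negbTE -> /negbTE -> //.
Qed.

Lemma sigma_pres a m (y : 'I_n) : 0 < a < n -> a != m ->
  (nat_of_ord (sigma n a y) < m) = (nat_of_ord y < m).
Proof.
move=> ha am; rewrite sigma_val //.
case: eqP => e1; first by lia.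
case: eqP => e2; lia.
Qed.

Lemma sigma_fix a (y : 'I_n) : 0 < a < n -> (nat_of_ord y < a.-1) || (a < nat_of_ord y) ->
  sigma n a y = y.
Proof.
move=> ha /orP hy; apply: ord_inj; rewrite sigma_val //.
case: eqP => e1; first by case: hy; lia.
case: eqP => e2; first by case: hy; lia.
by [].
Qed.

Lemma sigma_inv a : 0 < a < n -> (sigma n a * sigma n a = 1)%g.
Proof. by move=> ha; have [A0 [A1 [_ [_ ->]]]] := sigmaE ha; rewrite tperm2. Qed.

Definition ninv (p : perm) : nat :=
  \sum_(ij : 'I_n * 'I_n) ((ij.1 < ij.2) && (p ij.2 < p ij.1)).

Lemma tperm_val (A0 A1 z : 'I_n) :
  nat_of_ord (tperm A0 A1 z) = if nat_of_ord z == nat_of_ord A0 then nat_of_ord A1 else if nat_of_ord z == nat_of_ord A1 then nat_of_ord A0 else nat_of_ord z.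
Proof.
case: tpermP => [->|->|h1 h2]; rewrite ?eqxx //.
- by case: eqP => // /val_inj ->.
- have : nat_of_ord z != nat_of_ord A0 by apply/eqP => /val_inj.
  have : nat_of_ord z != nat_of_ord A1 by apply/eqP => /val_inj.
  by move=> /negbTE -> /negbTE ->.
Qed.

Lemma tcmp (A0 A1 x y : 'I_n) : nat_of_ord A1 = (nat_of_ord A0).+1 -> nat_of_ord x != nat_of_ord y ->
  ~~ ((nat_of_ord x == nat_of_ord A0) && (nat_of_ord y == nat_of_ord A1)) -> ~~ ((nat_of_ord x == nat_of_ord A1) && (nat_of_ord y == nat_of_ord A0)) ->
  (tperm A0 A1 y < tperm A0 A1 x) = (y < x).
Proof.
rewrite !tperm_val => e; rewrite e.
case: (nat_of_ord x =P nat_of_ord A0) => ?; case: (nat_of_ord x =P (nat_of_ord A0).+1) => ?;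
case: (nat_of_ord y =P nat_of_ord A0) => ?; case: (nat_of_ord y =P (nat_of_ord A0).+1) => ? /=; lia.
Qed.

Lemma inv_sigma (p : perm) (A0 A1 : 'I_n) : (A1 : nat) = (A0 : nat).+1 ->
  ninv (p * tperm A0 A1)%g + (p^-1 A1 < p^-1 A0)%g = ninv p + (p^-1 A0 < p^-1 A1)%g.
Proof.
move=> e.
set i0 := (p^-1 A0)%g; set j0 := (p^-1 A1)%g.
have pi0 : p i0 = A0 by rewrite /i0 permKV.
have pj0 : p j0 = A1 by rewrite /j0 permKV.
have ne : (i0 : nat) != j0.
  apply/eqP => /ord_inj h; have : p i0 = p j0 by rewrite h.
  by rewrite pi0 pj0 => /(congr1 (@nat_of_ord n)); lia.
have ne2 : (j0, i0) != (i0, j0) :> ('I_n * 'I_n).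
  apply/eqP => -[] /(congr1 (@nat_of_ord n)); lia.
rewrite /ninv (bigD1 (i0,j0)) //= (bigD1 (j0,i0)) //=.
rewrite [in RHS](bigD1 (i0,j0)) //= [in RHS](bigD1 (j0,i0)) //=.
rewrite !permM pi0 pj0 tpermL tpermR.
set S1 := \sum_(i | _) _; set S2 := \sum_(i | _) _.
have -> : S1 = S2.
  apply: eq_bigr => -[i j] /andP[h1 h2] /=.
  rewrite !permM.
  case: (ltnP i j) => hij //=.
  have Pij : forall (x y : 'I_n) (a b : 'I_n), p x = a -> nat_of_ord (p y) = nat_of_ord a -> y = x.
    move=> x y a b hx hy; apply: (@perm_inj _ p); rewrite hx; exact: ord_inj.
  congr (nat_of_bool _); apply: (@tcmp A0 A1 (p i) (p j) e).
  - apply/eqP => h; have hh : j = i by apply: (Pij i j (p i) (p i)) => //.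
    by rewrite hh ltnn in hij.
  - apply/negP => /andP[/eqP a1 /eqP a2].
    have ei : i = i0 by apply: (Pij i0 i A0 A0).
    have ej : j = j0 by apply: (Pij j0 j A1 A1).
    by rewrite ei ej eqxx in h1.
  - apply/negP => /andP[/eqP a1 /eqP a2].
    have ei : i = j0 by apply: (Pij j0 i A1 A1).
    have ej : j = i0 by apply: (Pij i0 j A0 A0).
    by rewrite ei ej eqxx in h2.
have h1 : (A0 < A1) = true by apply/idP; lia.
have h2 : (A1 < A0) = false by apply/negbTE; lia.
rewrite h1 h2 !andbF !andbT.
rewrite /= !add0n; lia.
Qed.

Lemma sigma_tperm (A0 A1 : 'I_n) : (A1 : nat) = (A0 : nat).+1 -> sigma n A1 = tperm A0 A1.
Proof.
move=> e; have ha : 0 < A1 < n by rewrite ltn_ord; lia.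
have [B0 [B1 [e0 [e1 ->]]]] := sigmaE ha.
have -> : B0 = A0 by apply: ord_inj; lia.
by have -> : B1 = A1 by apply: ord_inj; lia.
Qed.

Lemma inv1 : ninv 1 = 0.
Proof.
rewrite /ninv big1 // => -[i j] _ /=; rewrite !perm1.
by case: (ltnP i j) => h //=; rewrite ltnNge ltnW.
Qed.

Lemma word_perm_cons a s : word_perm n (a :: s) = (word_perm n s * sigma n a)%g.
Proof. by []. Qed.

Lemma word_perm_cat u v : word_perm n (u ++ v) = (word_perm n v * word_perm n u)%g.
Proof.
elim: u => [|a u IH] /=; first by rewrite mulg1.
by rewrite IH mulgA.
Qed.

Lemma inv_sigma_step (p : perm) a : 0 < a < n ->
  ninv (p * sigma n a)%g <= (ninv p).+1.
Proof.
move=> ha; have [A0 [A1 [e0 [e1 ->]]]] := sigmaE ha.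
have e : (A1 : nat) = (A0 : nat).+1 by lia.
have := inv_sigma p e; lia.
Qed.

Lemma inv_word s : valid_word n s -> ninv (word_perm n s) <= size s.
Proof.
elim: s => [|a s IH] /=; first by rewrite inv1.
move=> /andP[ha hs]; have := inv_sigma_step (word_perm n s) ha.
have := IH hs; lia.
Qed.

Lemma mono_id (q : perm) :
  (forall a b : 'I_n, (a : nat) = b.+1 -> q b < q a) -> q = 1%g.
Proof.
move=> H.
have up : forall m (i : 'I_n), (i : nat) = m -> m <= q i.
  elim => [|m IH] i ei; first by [].
  have hb : m < n by have := ltn_ord i; lia.
  have := H i (Ordinal hb) ei; have := IH (Ordinal hb) erefl; lia.
have down : forall d (i : 'I_n), (i : nat) + d = n.-1 -> q i <= i.
  elim => [|d IH] i ei; first by have := ltn_ord (q i); lia.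
  have hb : i.+1 < n by have := ltn_ord i; lia.
  have := H (Ordinal hb) i erefl; have := IH (Ordinal hb) ltac:(simpl; lia); simpl; lia.
apply/permP => i; rewrite perm1; apply: ord_inj.
have := up i i erefl; have := down (n.-1 - i) i ltac:(have := ltn_ord i; lia); lia.
Qed.

Lemma exists_word (p : perm) : exists s, [/\ valid_word n s, word_perm n s = p & size s = ninv p].
Proof.
have [N] := ubnP (ninv p); elim: N p => [|N IH] p hN //.
case: (classic (exists A0 A1 : 'I_n, (A1 : nat) = (A0 : nat).+1 /\ (p^-1 A1 < p^-1 A0)%g)).
- move=> [A0 [A1 [e lt]]].
  have := inv_sigma p e; rewrite lt ltnNge (ltnW lt) /= => eq.
  have [s [vs ws ss]] := IH (p * tperm A0 A1)%g ltac:(lia).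
  exists (nat_of_ord A1 :: s); split.
  + by rewrite /= vs andbT ltn_ord; lia.
  + by rewrite word_perm_cons ws (sigma_tperm e) -mulgA tperm2 mulg1.
  + by rewrite /= ss; lia.
- move=> hn.
  have q1 : (p^-1)%g = 1%g.
    apply: mono_id => a b e.
    have : ~ (p^-1 a < p^-1 b)%g by move=> h; apply: hn; exists b, a.
    move/negP; rewrite -leqNgt leq_eqVlt => /orP[/eqP h|//].
    have : a = b by apply: (@perm_inj _ (p^-1)%g); apply: ord_inj.
    by move=> hab; rewrite hab in e; lia.
  have -> : p = 1%g by rewrite -[p]invgK q1 invg1.
  by exists [::]; rewrite inv1.
Qed.

Lemma reducedP (w : perm) s :
  reduced_word w s <-> [/\ valid_word n s, word_perm n s = w & size s = ninv w].
Proof.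
split.
- move=> [vs ws mn]; split => //.
  have [t [vt wt st]] := exists_word w.
  have := mn t vt wt; have := inv_word vs; rewrite ws; lia.
- move=> [vs ws ss]; split => // t vt wt.
  have := inv_word vt; rewrite wt; lia.
Qed.

Lemma reduced_tail (w : perm) a s : reduced_word w (a :: s) -> reduced_word (word_perm n s) s.
Proof.
move=> [vs ws mn]; move: (vs) => /= /andP[ha vs']; split => // t vt wt.
have h := mn (a :: t) ltac:(by rewrite /= ha vt) ltac:(by rewrite word_perm_cons wt -word_perm_cons).
simpl in h; lia.
Qed.

Lemma reduced_valid (w : perm) s a : reduced_word w s -> a \in s -> 0 < a < n.
Proof. by move=> [vs _ _] ha; move/allP: vs => /(_ a ha). Qed.

Lemma descent (w : perm) a s (A0 A1 : 'I_n) : reduced_word w (a :: s) ->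
  (A0 : nat) = a.-1 -> (A1 : nat) = a -> (w^-1 A1 < w^-1 A0)%g.
Proof.
move=> r e0 e1.
have ha := reduced_valid r (mem_head a s).
have e : (A1 : nat) = (A0 : nat).+1 by lia.
move/reducedP: (r) => [vs ws ss].
have := inv_sigma w e.
have -> : (w * tperm A0 A1)%g = word_perm n s.
  by rewrite -ws word_perm_cons -e1 (sigma_tperm e) -mulgA tperm2 mulg1.
move: (vs) => /= /andP[_ vs']; have := inv_word vs'.
rewrite /= in ss; rewrite -ss => h1 h2.
case: (ltngtP ((w^-1)%g A1) ((w^-1)%g A0)) h2 => h //; first by lia.
move=> _; have : A0 = A1 by apply: (@perm_inj _ (w^-1)%g); apply: ord_inj.
by move/(congr1 (@nat_of_ord n)); lia.
Qed.

Lemma CL (w : perm) m : (forall i : 'I_n, i < m -> w i < m) ->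
  forall j : 'I_n, w j < m -> j < m.
Proof.
move=> H j hj.
set A := [set i : 'I_n | i < m].
have hsub : w @: A \subset A.
  apply/subsetP => y /imsetP[x hx ->]; rewrite inE; apply: H; by move: hx; rewrite inE.
have eqA : w @: A = A.
  by apply/eqP; rewrite eqEcard hsub /= (card_imset _ (@perm_inj _ w)).
have : w j \in w @: A by rewrite eqA inE.
by rewrite mem_imset ?inE //; exact: perm_inj.
Qed.

Lemma conv21 (w : perm) m : (exists j : 'I_n, m <= j /\ w j < m) ->
  exists i : 'I_n, i < m /\ m <= w i.
Proof.
move=> [j [h1 h2]]; apply: NNPP => hn.
have H : forall i : 'I_n, i < m -> w i < m.
  move=> i hi; rewrite ltnNge; apply/negP => h; apply: hn; by exists i.
have := CL H h2; lia.
Qed.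

Lemma conv12 (w : perm) m : (exists i : 'I_n, i < m /\ m <= w i) ->
  exists j : 'I_n, m <= j /\ w j < m.
Proof.
move=> [i [h1 h2]]; apply: NNPP => hn.
have H : forall v : 'I_n, v < m -> (w^-1)%g v < m.
  move=> v hv; rewrite ltnNge; apply/negP => h; apply: hn; exists ((w^-1)%g v).
  by rewrite permKV.
have := CL H (j := w i); rewrite permK => /(_ h1); lia.
Qed.

Lemma supp1 (w : perm) s a : reduced_word w s -> a \in s ->
  exists i : 'I_n, i < a /\ a <= w i.
Proof.
elim: s w => [|b s IH] w //= r.
have hb := reduced_valid r (mem_head b s).
have rt := reduced_tail r.
have wE : forall x, w x = sigma n b (word_perm n s x).
  by move=> x; move: r => [_ <- _]; rewrite word_perm_cons permM.
rewrite in_cons; case: (a =P b) => [eba|nba] /= ha.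
- subst b.
  have [A0 [A1 [e0 [e1 _]]]] := sigmaE hb.
  have d := descent r e0 e1.
  case: (ltnP ((w^-1)%g A1) a) => h.
  + by exists ((w^-1)%g A1); rewrite permKV e1.
  + apply: conv21; exists ((w^-1)%g A0); rewrite permKV e0; split; lia.
- have [i [h1 h2]] := IH _ rt ha.
  have nb : b != a by apply/eqP => e; apply: nba.
  by exists i; split => //; rewrite wE leqNgt (sigma_pres _ hb nb) -leqNgt.
Qed.

Lemma supp2 (w : perm) s a : reduced_word w s -> a \in s ->
  exists j : 'I_n, a <= j /\ w j < a.
Proof. by move=> r ha; apply: conv12; exact: supp1 r ha. Qed.

Lemma mem_body_cons (a b : nat) s : b \in s -> b \in a :: s.
Proof. by move=> h; rewrite in_cons h orbT. Qed.

Lemma wE_of (w : perm) a s x : reduced_word w (a :: s) -> w x = sigma n a (word_perm n s x).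
Proof. by move=> [_ <- _]; rewrite word_perm_cons permM. Qed.

Lemma word_pres (Q : pred nat) s : (forall a, a \in s -> forall y : 'I_n, Q (sigma n a y) = Q y) ->
  forall y : 'I_n, Q (word_perm n s y) = Q y.
Proof.
elim: s => [|a s IH] H y /=; first by rewrite perm1.
have H' : forall b, b \in s -> forall y : 'I_n, Q (sigma n b y) = Q y.
  by move=> b hb; apply: H; rewrite in_cons hb orbT.
by rewrite permM H ?mem_head // IH.
Qed.

Lemma word_fix s (y : 'I_n) : (forall a, a \in s -> sigma n a y = y) -> word_perm n s y = y.
Proof.
elim: s => [|a s IH] H /=; first by rewrite perm1.
have H' : forall b, b \in s -> sigma n b y = y.
  by move=> b hb; apply: H; rewrite in_cons hb orbT.
by rewrite permM IH // H ?mem_head.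
Qed.

Lemma word_notin s m (y : 'I_n) : valid_word n s -> m \notin s ->
  (word_perm n s y < m) = (y < m).
Proof.
move=> vs nm; apply: (word_pres (Q := fun v => v < m)) => a ha z.
apply: sigma_pres; first by move/allP: vs => /(_ a ha).
by apply/eqP => e; rewrite -e ha in nm.
Qed.

Lemma concat (Q : pred nat) u (V : perm) : reduced_word (word_perm n u) u ->
  (forall a, a \in u -> Q a.-1 /\ Q a) ->
  (forall a, a \in u -> forall y : 'I_n, Q (sigma n a y) = Q y) ->
  (forall p q : 'I_n, p < q -> Q p -> Q q -> (V^-1 p < V^-1 q)%g) ->
  ninv (V * word_perm n u)%g = size u + ninv V.
Proof.
elim: u => [|a u IH] r HQ Hs HV; first by rewrite /= mulg1.
have rt := reduced_tail r.
have IH' := IH rt (fun b hb => HQ b (mem_body_cons a hb)) (fun b hb => Hs b (mem_body_cons a hb)) HV.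
have ha := reduced_valid r (mem_head a u).
have [A0 [A1 [e0 [e1 et]]]] := sigmaE ha.
have e : (A1 : nat) = (A0 : nat).+1 by lia.
rewrite word_perm_cons et.
set U := word_perm n u.
have asc : (U^-1 A0 < U^-1 A1)%g.
  move/reducedP: (r) => [vs ws ss]; move/reducedP: (rt) => [_ _ ss'].
  have := inv_sigma U e; rewrite /U -et -word_perm_cons -ss /= ss'.
  case: (ltngtP ((word_perm n u)^-1 A0)%g ((word_perm n u)^-1 A1)%g) => h //=; try lia.
have QU : forall y, Q (U y) = Q y by apply: word_pres => b hb; apply: Hs; exact: mem_body_cons.
have Q0 : Q (U^-1 A0)%g by rewrite -QU permKV e0; case: (HQ a (mem_head _ _)).
have Q1 : Q (U^-1 A1)%g by rewrite -QU permKV e1; case: (HQ a (mem_head _ _)).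
have hv := HV _ _ asc Q0 Q1.
have := inv_sigma (V * U)%g e.
rewrite !invMg !permM mulgA.
rewrite hv ltnNge (ltnW hv) /= IH' addn0 => ->; lia.
Qed.
End S.

Fixpoint patb (c d : nat) (s : seq nat) : bool :=
  if s is a :: s' then ((a == c) && (d \in s')) || patb c d s' else false.

Lemma patb_mem c d s : patb c d s -> d \in s.
Proof.
elim: s => [|a s IH] //= /orP[/andP[_ h]|h]; rewrite in_cons ?h ?IH ?orbT //.
Qed.

Lemma patP c d s : patb c d s <->
  exists i j, [/\ i < j, j < size s, nth 0 s i = c & nth 0 s j = d].
Proof.
elim: s => [|a s IH] /=; first by split => // -[i [j []]]; lia.
split.
- move=> /orP[/andP[/eqP ac ds]|/IH [i [j [h1 h2 h3 h4]]]].
  + exists 0, (index d s).+1; split => //=; first by rewrite ltnS index_mem.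
    exact: nth_index.
  + by exists i.+1, j.+1; split.
- move=> [[|i] [[|j] [h1 h2 h3 h4]]] //=; rewrite /= in h1 h2 h3 h4.
  + by rewrite h3 eqxx /= -h4 mem_nth.
  + by apply/orP; right; apply/IH; exists i, j; split.
Qed.

Section G.
Variable n : nat.
Local Notation perm := {perm 'I_n}.

Lemma G1f (w : perm) s k : reduced_word w s -> patb k.+1 k s ->
  exists i : 'I_n, i < k /\ k.+1 <= w i.
Proof.
elim: s w => [|a s IH] w r //=.
have ha := reduced_valid r (mem_head a s).
have rt := reduced_tail r.
have wE := fun x => wE_of x r.
case: (boolP ((a == k.+1) && (k \in s))) => [/andP[/eqP ak ks] _|hn /= hp].
- subst a.
  have [A0 [A1 [e0 [e1 _]]]] := sigmaE ha.
  have d := descent r e0 e1.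
  have [i0 [h1 h2]] := supp1 rt ks.
  move: (congr1 (@nat_of_ord n) (wE i0)); rewrite sigma_val // => wi0.
  move: wi0; case: eqP => [e2|nk] wi0.
    by exists i0; rewrite wi0.
  move: wi0; case: eqP => [e3|nk1] wi0.
    have ei : i0 = (w^-1)%g A0 by rewrite -(permK w i0); congr (_ _); apply: ord_inj; rewrite wi0 e0.
    exists ((w^-1)%g A1); rewrite permKV e1; split => //.
    move: d; rewrite -ei; lia.
  exists i0; split => //; rewrite wi0; lia.
- have ks := patb_mem hp.
  have ak : a != k.+1 by apply/eqP => e; rewrite e eqxx ks in hn.
  have [i [h1 h2]] := IH _ rt hp.
  by exists i; split => //; rewrite wE leqNgt (sigma_pres _ ha ak) -leqNgt.
Qed.

Lemma G2f (w : perm) s k : reduced_word w s -> patb k k.+1 s ->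
  exists j : 'I_n, k.+1 <= j /\ w j < k.
Proof.
elim: s w => [|a s IH] w r //=.
have ha := reduced_valid r (mem_head a s).
have rt := reduced_tail r.
have wE := fun x => wE_of x r.
case: (boolP ((a == k) && (k.+1 \in s))) => [/andP[/eqP ak ks] _|hn /= hp].
- subst a.
  have [A0 [A1 [e0 [e1 _]]]] := sigmaE ha.
  have d := descent r e0 e1.
  have [j0 [h1 h2]] := supp2 rt ks.
  move: (congr1 (@nat_of_ord n) (wE j0)); rewrite sigma_val // => wj0.
  move: wj0; case: eqP => [e2|nk] wj0.
    have ej : j0 = (w^-1)%g A1 by rewrite -(permK w j0); congr (_ _); apply: ord_inj; rewrite wj0 e1.
    exists ((w^-1)%g A0); rewrite permKV e0; split; last by lia.
    move: d; rewrite -ej; lia.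
  move: wj0; case: eqP => [e3|nk1] wj0.
    by exists j0; split => //; rewrite wj0; lia.
  exists j0; split => //; rewrite wj0; lia.
- have ks := patb_mem hp.
  have ak : a != k by apply/eqP => e; rewrite e eqxx ks in hn.
  have [j [h1 h2]] := IH _ rt hp.
  by exists j; split => //; rewrite wE (sigma_pres _ ha ak).
Qed.

Lemma G1b s k : valid_word n s -> (exists i : 'I_n, i < k /\ k.+1 <= word_perm n s i) ->
  patb k.+1 k s.
Proof.
elim: s => [|a s IH] /=; first by move=> _ [i [h1]]; rewrite perm1; lia.
move=> /andP[ha vs] [i [h1 h2]].
case: (leqP k.+1 (word_perm n s i)) => h3.
  by rewrite IH ?orbT //; exists i.
move: h2; rewrite permM.
case: (a =P k.+1) => [ak|ak] h2; last first.
  have ak' : a != k.+1 by apply/eqP.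
  by move: h2; rewrite leqNgt (sigma_pres _ ha ak') h3.
subst a; rewrite ?eqxx /=.
apply/orP; left; apply: NNPP => /negP ks.
have := word_notin i vs ks; rewrite h1 => h4.
move: h2; rewrite sigma_fix //; first by lia.
by apply/orP; left; simpl.
Qed.

Lemma G2b s k : valid_word n s -> (exists j : 'I_n, k.+1 <= j /\ word_perm n s j < k) ->
  patb k k.+1 s.
Proof.
elim: s => [|a s IH] /=; first by move=> _ [i [h1]]; rewrite perm1; lia.
move=> /andP[ha vs] [j [h1 h2]].
case: (ltnP (word_perm n s j) k) => h3.
  by rewrite IH ?orbT //; exists j.
move: h2; rewrite permM.
case: (a =P k) => [ak|ak] h2; last first.
  have ak' : a != k by apply/eqP.
  by move: h2; rewrite (sigma_pres _ ha ak'); lia.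
subst a; rewrite ?eqxx /=.
apply/orP; left; apply: NNPP => /negP ks.
have h4 := word_notin j vs ks.
have h5 : k.+1 <= word_perm n s j by rewrite leqNgt h4 -leqNgt.
move: h2; rewrite sigma_fix //; first by lia.
by apply/orP; right; lia.
Qed.
End G.

Lemma card_lt n m : m <= n -> #|[set i : 'I_n | i < m]| = m.
Proof.
move=> hm.
have -> : [set i : 'I_n | i < m] = [set widen_ord hm j | j in 'I_m].
  apply/setP => i; rewrite inE; apply/idP/imsetP.
  - by move=> hi; exists (Ordinal hi) => //; apply: ord_inj.
  - by move=> [j _ ->] /=.
rewrite card_imset ?card_ord //.
by move=> x y /(congr1 (@nat_of_ord n)) /= /ord_inj.
Qed.

Lemma card_ge n m : m <= n -> #|[set i : 'I_n | m <= i]| = n - m.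
Proof.
move=> hm.
have -> : [set i : 'I_n | m <= i] = ~: [set i : 'I_n | i < m].
  by apply/setP => i; rewrite !inE -leqNgt.
have := cardsC [set i : 'I_n | i < m]; rewrite card_lt // card_ord; lia.
Qed.

Lemma partA_f n (w : {perm 'I_n}) k (iA jD : 'I_n) : iA < k -> k <= w iA -> k.+1 <= jD ->
  w jD < k.+1 -> k.+1 < n -> 0 < k ->
  (exists u v, reduced_word w (u ++ v) /\
       all (fun a => a <= k) u /\ all (fun a => k.+1 <= a) v) ->
  (exists x : 'I_n, x.+1 < k.+1 /\
       [set w i | i : 'I_n & i.+1 <= k] = [set v : 'I_n | v.+1 <= k.+1] :\ x /\
       k.+1 < ((w^-1)%g x).+1).
Proof.
move=> hiA1 hiA2 hjD1 hjD2 hkn hk0 [u [v [r [hu hv]]]].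
have [vuv wuv _] := r.
move: vuv; rewrite /valid_word all_cat => /andP[vu vv].
have H : forall i : 'I_n, i < k -> w i < k.+1.
  move=> i hi; rewrite -wuv word_perm_cat permM.
  rewrite (@word_fix n v i); last first.
    move=> a ha; move/allP: hv => /(_ a ha) h1; move/allP: vv => /(_ a ha) h2.
    by apply: sigma_fix => //; apply/orP; left; lia.
  rewrite word_notin //; first by lia.
  by apply/negP => /(allP hu); lia.
have xk : w jD < k.
  have : nat_of_ord (w jD) != k.
    apply/eqP => e; have := H iA hiA1 => h.
    have : w iA = w jD by apply: ord_inj; lia.
    move/perm_inj => e2; rewrite e2 in hiA1; lia.
  lia.
exists (w jD); split => //; split; last by rewrite permK.
apply/eqP; rewrite eqEcard; apply/andP; split.
- apply/subsetP => y /imsetP[i]; rewrite inE => hi ->.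
  rewrite !inE H // andbT; apply/eqP => /perm_inj e; rewrite e in hi; lia.
- rewrite card_imset; last exact: perm_inj.
  have := cardsD1 (w jD) [set v : 'I_n | v.+1 <= k.+1].
  rewrite inE ltnW // card_lt; last by lia.
  rewrite card_lt; last by lia.
  rewrite add1n => -[h]. rewrite [k in _ <= k]h. exact: leqnn.
Qed.

Lemma Vinv_fix n (V : {perm 'I_n}) (y : 'I_n) : V y = y -> (V^-1)%g y = y.
Proof. by move=> h; rewrite -{1}h permK. Qed.

Lemma partA_b n (w : {perm 'I_n}) k : k.+1 < n -> 0 < k ->
  (exists x : 'I_n, x.+1 < k.+1 /\
       [set w i | i : 'I_n & i.+1 <= k] = [set v : 'I_n | v.+1 <= k.+1] :\ x /\
       k.+1 < ((w^-1)%g x).+1) ->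
  (exists u v, reduced_word w (u ++ v) /\
       all (fun a => a <= k) u /\ all (fun a => k.+1 <= a) v).
Proof.
move=> hkn hk0 [x [hx [hs hw]]].
have Hw : forall i : 'I_n, i < k -> w i < k.+1 /\ w i != x.
  move=> i hi; have : w i \in [set w i | i : 'I_n & i.+1 <= k] by apply: imset_f; rewrite inE.
  by rewrite hs !inE => /andP[-> ->].
pose f (i : 'I_n) : 'I_n := if i < k then w i else if nat_of_ord i == k then x else i.
have finj : injective f.
  move=> i j; rewrite /f.
  case: (ltnP i k) => hi; case: (ltnP j k) => hj.
  - exact: perm_inj.
  - case: eqP => ej e.
      by have := Hw i hi; rewrite e eqxx => -[].
    have := Hw i hi; rewrite e => -[h _]; lia.
  - case: eqP => ei e.
      by have := Hw j hj; rewrite -e eqxx => -[].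
    have := Hw j hj; rewrite -e => -[h _]; lia.
  - case: eqP => ei; case: eqP => ej e //.
    + by apply: ord_inj; lia.
    + have := congr1 (@nat_of_ord n) e; lia.
    + have := congr1 (@nat_of_ord n) e; lia.
pose U := perm finj.
have UE : forall i, U i = f i by move=> i; rewrite permE.
pose V := (w * U^-1)%g.
have VU : (V * U)%g = w by rewrite /V -mulgA mulVg mulg1.
have Vfix : forall i : 'I_n, i < k -> V i = i.
  move=> i hi; rewrite /V permM; apply: (@perm_inj _ U); rewrite permKV UE /f hi //.
have [u [vu wu su]] := exists_word U.
have [v [vv wv sv]] := exists_word V.
have ru : reduced_word U u by apply/reducedP.
have rv : reduced_word V v by apply/reducedP.
have hu : forall a, a \in u -> a <= k.
  move=> a ha; have [i [h1 h2]] := supp1 ru ha.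
  rewrite leqNgt; apply/negP => hak; move: h2; rewrite UE /f.
  case: (ltnP i k) => hi.
    by have := Hw i hi; lia.
  case: eqP => ei; lia.
have hv : forall a, a \in v -> k.+1 <= a.
  move=> a ha; have [i [h1 h2]] := supp1 rv ha.
  rewrite ltnNge; apply/negP => hak; move: h2; rewrite Vfix; lia.
exists u, v; split; last by split; apply/allP.
apply/reducedP; split.
- by rewrite /valid_word all_cat; apply/andP; split.
- by rewrite word_perm_cat wu wv.
- rewrite -VU -wu (@concat _ (fun y => y < k.+1)) ?size_cat.
  + by rewrite sv.
  + by rewrite wu.
  + move=> a ha; have := hu a ha; lia.
  + move=> a ha y; apply: sigma_pres; first by move/allP: vu => /(_ a ha).
    by apply/eqP => e; have := hu a ha; lia.
  + move=> p q hpq hp hq.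
    have Vk : k <= (V^-1)%g (Ordinal (ltnW hkn)).
      rewrite leqNgt; apply/negP => h.
      have := Vfix _ h; rewrite permKV => e.
      move: h; rewrite -e /=; lia.
    case: (ltnP q k) => hqk.
      by rewrite !Vinv_fix ?Vfix //; lia.
    have -> : q = Ordinal (ltnW hkn) by apply: ord_inj => /=; lia.
    rewrite Vinv_fix ?Vfix //; lia.
Qed.

Lemma partB_f n (w : {perm 'I_n}) k (iA jD : 'I_n) : iA < k -> k <= w iA -> k.+1 <= jD ->
  w jD < k.+1 -> k.+1 < n -> 0 < k ->
  (exists u v, reduced_word w (u ++ v) /\
       all (fun a => k.+1 <= a) u /\ all (fun a => a <= k) v) ->
  (exists y : 'I_n, k.+1 < y.+1 /\
       [set w i | i : 'I_n & k.+2 <= i.+1] = [set v : 'I_n | k.+1 <= v.+1] :\ y /\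
       ((w^-1)%g y).+1 < k.+1).
Proof.
move=> hiA1 hiA2 hjD1 hjD2 hkn hk0 [u [v [r [hu hv]]]].
have [vuv wuv _] := r.
move: vuv; rewrite /valid_word all_cat => /andP[vu vv].
have H : forall i : 'I_n, k.+1 <= i -> k <= w i.
  move=> i hi; rewrite -wuv word_perm_cat permM.
  rewrite (@word_fix n v i); last first.
    move=> a ha; move/allP: hv => /(_ a ha) h1; move/allP: vv => /(_ a ha) h2.
    by apply: sigma_fix => //; apply/orP; right; lia.
  rewrite leqNgt word_notin //; first by rewrite -leqNgt; lia.
  by apply/negP => /(allP hu); lia.
have yk : k < w iA.
  have : nat_of_ord (w iA) != k.
    apply/eqP => e; have := H jD hjD1 => h.
    have : w iA = w jD by apply: ord_inj; lia.
    move/perm_inj => e2; rewrite e2 in hiA1; lia.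
  lia.
exists (w iA); split => //; split; last by rewrite permK.
apply/eqP; rewrite eqEcard; apply/andP; split.
- apply/subsetP => y /imsetP[i]; rewrite inE => hi ->.
  rewrite !inE ltnS H // andbT; apply/eqP => /perm_inj e; rewrite e in hi; lia.
- rewrite card_imset; last exact: perm_inj.
  have -> : [set i : 'I_n | k.+2 <= i.+1] = [set i : 'I_n | k.+1 <= i].
    by apply/setP => i; rewrite !inE ltnS.
  rewrite card_ge; last by lia.
  have -> : [set v : 'I_n | k.+1 <= v.+1] = [set v : 'I_n | k <= v] by apply/setP => i; rewrite !inE ltnS.
  have h := cardsD1 (w iA) [set v : 'I_n | k <= v].
  have hm : w iA \in [set v : 'I_n | k <= v] by rewrite inE ltnW.
  rewrite hm card_ge in h; last by lia.
  by rewrite subnS h add1n /=; exact: leqnn.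
Qed.

Lemma partB_b n (w : {perm 'I_n}) k : k.+1 < n -> 0 < k ->
  (exists y : 'I_n, k.+1 < y.+1 /\
       [set w i | i : 'I_n & k.+2 <= i.+1] = [set v : 'I_n | k.+1 <= v.+1] :\ y /\
       ((w^-1)%g y).+1 < k.+1) ->
  (exists u v, reduced_word w (u ++ v) /\
       all (fun a => k.+1 <= a) u /\ all (fun a => a <= k) v).
Proof.
move=> hkn hk0 [y [hy [hs hw]]].
have Hw : forall i : 'I_n, k < i -> k <= w i /\ w i != y.
  move=> i hi; have : w i \in [set w i | i : 'I_n & k.+2 <= i.+1] by apply: imset_f; rewrite inE.
  by rewrite hs !inE => /andP[h1 h2]; split => //; lia.
pose f (i : 'I_n) : 'I_n := if k < i then w i else if nat_of_ord i == k then y else i.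
have finj : injective f.
  move=> i j; rewrite /f.
  case: (ltnP k i) => hi; case: (ltnP k j) => hj.
  - exact: perm_inj.
  - case: eqP => ej e.
      by have := Hw i hi; rewrite e eqxx => -[].
    have := Hw i hi; rewrite e => -[h _]; lia.
  - case: eqP => ei e.
      by have := Hw j hj; rewrite -e eqxx => -[].
    have := Hw j hj; rewrite -e => -[h _]; lia.
  - case: eqP => ei; case: eqP => ej e //.
    + by apply: ord_inj; lia.
    + have := congr1 (@nat_of_ord n) e; lia.
    + have := congr1 (@nat_of_ord n) e; lia.
pose U := perm finj.
have UE : forall i, U i = f i by move=> i; rewrite permE.
pose V := (w * U^-1)%g.
have VU : (V * U)%g = w by rewrite /V -mulgA mulVg mulg1.
have Vfix : forall i : 'I_n, k < i -> V i = i.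
  move=> i hi; rewrite /V permM; apply: (@perm_inj _ U); rewrite permKV UE /f hi //.
have [u [vu wu su]] := exists_word U.
have [v [vv wv sv]] := exists_word V.
have ru : reduced_word U u by apply/reducedP.
have rv : reduced_word V v by apply/reducedP.
have hu : forall a, a \in u -> k.+1 <= a.
  move=> a ha; have [i [h1 h2]] := supp1 ru ha.
  rewrite ltnNge; apply/negP => hak; move: h2; rewrite UE /f.
  have hik : ~~ (k < i) by rewrite -leqNgt; lia.
  rewrite (negbTE hik); case: eqP => ei; lia.
have hv : forall a, a \in v -> a <= k.
  move=> a ha; have [i [h1 h2]] := supp1 rv ha.
  rewrite leqNgt; apply/negP => hak.
  case: (ltnP k i) => hi.
    by move: h2; rewrite Vfix //; lia.
  have hVi : k < V i by lia.
  have := Vfix _ hVi => /perm_inj e; rewrite e in hVi; lia.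
exists u, v; split; last by split; apply/allP.
apply/reducedP; split.
- by rewrite /valid_word all_cat; apply/andP; split.
- by rewrite word_perm_cat wu wv.
- rewrite -VU -wu (@concat _ (fun y => k <= y)) ?size_cat.
  + by rewrite sv.
  + by rewrite wu.
  + move=> a ha; have := hu a ha; lia.
  + move=> a ha z; rewrite !(leqNgt k); congr negb; apply: sigma_pres.
      by move/allP: vu => /(_ a ha).
    by apply/eqP => e; have := hu a ha; lia.
  + move=> p q hpq hp hq.
    have hk : k < n by lia.
    have Vk : (V^-1)%g (Ordinal hk) <= k.
      rewrite leqNgt; apply/negP => h.
      have := Vfix _ h; rewrite permKV => e.
      move: h; rewrite -e /=; lia.
    have hq' : k < q by lia.
    rewrite (Vinv_fix (Vfix _ hq')).
    case: (ltnP k p) => hpk.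
      by rewrite Vinv_fix ?Vfix //.
    have -> : p = Ordinal hk by apply: ord_inj => /=; lia.
    lia.
Qed.

Lemma partC n (w : {perm 'I_n}) k :
  (interlaced w k <->
   (exists i j : 'I_n, 1 <= i.+1 <= k /\ k.+2 <= j.+1 <= n /\
       k.+1 < (w i).+1 /\ (w j).+1 < k.+1)).
Proof.
split.
- move=> [nI nD].
  have [s [r hp]] : exists s, reduced_word w s /\ patb k.+1 k s.
    apply: NNPP => hn; apply: nI => s2 r2 i j hi hj ei ej.
    rewrite ltnNge; apply/negP => hji.
    have hne : i != j by apply/eqP => e; rewrite e ej in ei; lia.
    apply: hn; exists s2; split => //; apply/patP; exists j, i; split => //; lia.
  have [t [rt ht]] : exists s, reduced_word w s /\ patb k k.+1 s.
    apply: NNPP => hn; apply: nD => s2 r2 i j hi hj ei ej.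
    rewrite ltnNge; apply/negP => hji.
    have hne : i != j by apply/eqP => e; rewrite e ej in ei; lia.
    apply: hn; exists s2; split => //; apply/patP; exists i, j; split => //; lia.
  have [i [h1 h2]] := G1f r hp.
  have [j [h3 h4]] := G2f rt ht.
  exists i, j; split; first by lia.
  split; first by have := ltn_ord j; lia.
  split; lia.
- move=> [i [j [h1 [h2 [h3 h4]]]]].
  have [s [vs ws ss]] := exists_word w.
  have r : reduced_word w s by apply/reducedP.
  split.
  + move=> hI.
    have : patb k.+1 k s.
      apply: (G1b vs); exists i; rewrite ws; split; lia.
    move/patP => [i' [j' [c1 c2 c3 c4]]].
    have := hI s r j' i' c2 ltac:(lia) c4 c3; lia.
  + move=> hD.
    have : patb k k.+1 s.
      apply: (G2b vs); exists j; rewrite ws; split; lia.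
    move/patP => [i' [j' [c1 c2 c3 c4]]].
    have := hD s r i' j' ltac:(lia) c2 c3 c4; lia.
Qed.

Theorem theorem3p11 (n : nat) (w : {perm 'I_n}) (k : nat) :
  in_supp w k -> in_supp w k.+1 ->
  (* (a) *)
  ((exists u v, reduced_word w (u ++ v) /\
       all (fun a => a <= k) u /\ all (fun a => k.+1 <= a) v)
   <->
   (exists x : 'I_n, x.+1 < k.+1 /\
       [set w i | i : 'I_n & i.+1 <= k] = [set v : 'I_n | v.+1 <= k.+1] :\ x /\
       k.+1 < ((w^-1)%g x).+1))
  /\
  (* (b) *)
  ((exists u v, reduced_word w (u ++ v) /\
       all (fun a => k.+1 <= a) u /\ all (fun a => a <= k) v)
   <->
   (exists y : 'I_n, k.+1 < y.+1 /\
       [set w i | i : 'I_n & k.+2 <= i.+1] = [set v : 'I_n | k.+1 <= v.+1] :\ y /\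
       ((w^-1)%g y).+1 < k.+1))
  /\
  (* (c) *)
  (interlaced w k <->
   (exists i j : 'I_n, 1 <= i.+1 <= k /\ k.+2 <= j.+1 <= n /\
       k.+1 < (w i).+1 /\ (w j).+1 < k.+1)).
Proof.
move=> [s0 [r0 k0]] [s1 [r1 k1]].
have hk := reduced_valid r0 k0.
have hk1 := reduced_valid r1 k1.
have hkn : k.+1 < n by lia.
have hk0 : 0 < k by lia.
have [iA [iA1 iA2]] := supp1 r0 k0.
have [jD [jD1 jD2]] := supp2 r1 k1.
split; [|split].
- split; [exact: partA_f iA1 iA2 jD1 jD2 hkn hk0 | exact: partA_b].
- split; [exact: partB_f iA1 iA2 jD1 jD2 hkn hk0 | exact: partB_b].
- exact: partC.
Qed.
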